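(* Let $G$ be a finite abelian group, $\Phi$ a normalized $3$-cocycle on $G$, and $V=\bigoplus_{i=1}^nV_i$ an object of ${}^{\mathbbm{k}G}_{\mathbbm{k}G}\mathcal{YD}^{\Phi}$ with each $V_i$ simple. Let $H=G_V$. If $\Phi|_H$ is not an abelian $3$-cocycle on $H$, then $n\ge3$ and at least three of the summands $V_i$ are not of diagonal type.
   Context: $\mathbbm{k}$ is algebraically closed of characteristic zero. For a finite abelian group $K$, a normalized 3-cocycle $\Phi$ and $g\in K$, $\widetilde{\Phi}_g(x,y)=\frac{\Phi(g,x,y)\Phi(x,y,g)}{\Phi(x,g,y)}$. The category ${}^{\mathbbm{k}K}_{\mathbbm{k}K}\mathcal{YD}^{\Phi}$ has objects the $K$-graded spaces $V=\bigoplus_gV_g$ with operators $e\triangleright-$ preserving each $V_g$, $1\triangleright v=v$, $e\triangleright(f\triangleright v)=\widetilde{\Phi}_g(e,f)(ef)\triangleright v$ for $v\in V_g$ (with tensor product of degree $gh$ and action $e\triangleright(X\otimes Y)=\widetilde{\Phi}_e(g,h)(e\triangleright X)\otimes(e\triangleright Y)$). A simple object $V$ is concentrated in a single degree $g_V$; the support group $G_V$ of $V=\bigoplus_iV_i$ ($V_i$ simple) is the subgroup generated by the $g_{V_i}$. An object is of diagonal type if it is a direct sum of $1$-dimensional objects. A 3-cocycle $\Psi$ on $K$ is abelian if every simple object of ${}^{\mathbbm{k}K}_{\mathbbm{k}K}\mathcal{YD}^{\Psi}$ is $1$-dimensional. *)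

(* Defs.v *)
From HB Require Import structures.
From mathcomp Require Import all_boot all_order all_algebra all_fingroup.
Unset Printing Implicit Defensive.
Import GRing.Theory.
Local Open Scope ring_scope.

Section YD.
Variables (F : fieldType) (gT : finGroupType).

Definition normalized3 (G : {group gT}) (Phi : gT -> gT -> gT -> F) :=
  forall a b : gT, a \in G -> b \in G -> Phi (1%g) a b = 1 /\ Phi a (1%g) b = 1 /\ Phi a b (1%g) = 1.

Definition cocycle3 (G : {group gT}) (Phi : gT -> gT -> gT -> F) :=
  (forall a b c, a \in G -> b \in G -> c \in G -> Phi a b c != 0) /\
  (forall a b c d, a \in G -> b \in G -> c \in G -> d \in G ->
     Phi b c d * Phi a (b * c)%g d * Phi a b c =
     Phi (a * b)%g c d * Phi a b (c * d)%g).

Definition phit (Phi : gT -> gT -> gT -> F) (g x y : gT) : F :=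
  Phi g x y * Phi x y g / Phi x g y.

(* A (finite-dimensional) graded space with operators: component of degree g
   is F^(ydim g) (row vectors), and e acts on it by v |-> v *m yact g e. *)
Record ydobj := YDObj {
  ydim : gT -> nat;
  yact : forall g : gT, gT -> 'M[F]_(ydim g)
}.


Definition ytotdim (V : ydobj) : nat := (\sum_(g : gT) ydim V g)%N.

Definition is_yd (G : {group gT}) (Phi : gT -> gT -> gT -> F) (V : ydobj) :=
  [/\ forall g, g \notin G -> ydim V g = 0%N,
      forall g, g \in G -> yact V g (1%g) = 1%:M &
      forall g e f, g \in G -> e \in G -> f \in G ->
        (* e |> (f |> v) = phit_g(e,f) (ef) |> v, with right action by matrices *)
        yact V g f *m yact V g e = phit Phi g e f *: yact V g (e * f)%g].

Definition yd_subobj (G : {group gT}) (V : ydobj)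
  (U : forall g : gT, 'M[F]_(ydim V g)) :=
  forall g e, e \in G -> (U g *m yact V g e <= U g)%MS.

Definition yd_simple (G : {group gT}) (V : ydobj) :=
  (0 < ytotdim V)%N /\
  forall U : forall g : gT, 'M[F]_(ydim V g), yd_subobj G V U ->
    (forall g, U g = 0) \/ (forall g, row_full (U g)).

(* Degree of a simple object (the unique degree where it is nonzero). *)
Definition ydeg (V : ydobj) : gT := odflt (1%g) [pick g | (0 < ydim V g)%N].

Definition supp_group (n : nat) (V : 'I_n -> ydobj) : {group gT} :=
  (<< [set ydeg (V i) | i : 'I_n] >>)%G.

(* Diagonal type: direct sum of one-dimensional subobjects, i.e. every
   homogeneous component has a basis of common eigenvectors. *)
Definition diagonal_type (G : {group gT}) (V : ydobj) :=
  forall g, g \in G -> exists P : 'M[F]_(ydim V g),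
    P \in unitmx /\ forall e, e \in G -> is_diag_mx (P *m yact V g e *m invmx P).

(* Psi is an abelian 3-cocycle on H: every simple object of kH-YD^Psi
   is one-dimensional. *)
Definition abelian_cocycle (H : {group gT}) (Psi : gT -> gT -> gT -> F) :=
  forall V : ydobj, is_yd H Psi V -> yd_simple H V -> ytotdim V = 1%N.

End YD.

Arguments normalized3 {F gT}.
Arguments cocycle3 {F gT}.
Arguments phit {F gT}.
Arguments ytotdim {F gT}.
Arguments is_yd {F gT}.
Arguments yd_subobj {F gT}.
Arguments yd_simple {F gT}.
Arguments ydeg {F gT}.
Arguments supp_group {F gT n}.
Arguments diagonal_type {F gT}.
Arguments abelian_cocycle {F gT}.

(* Main.v *)
Require Import Defs.
From HB Require Import structures.
From mathcomp Require Import all_boot all_order all_algebra all_fingroup.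
From mathcomp Require Import ring zify.
Import GRing.Theory.
Local Open Scope ring_scope.

Definition beta (F : fieldType) (gT : finGroupType) (Phi : gT -> gT -> gT -> F) (g x y : gT) : F :=
  phit Phi g x y / phit Phi g y x.
Arguments beta {F gT}.
Arguments ydim {F gT}.
Arguments yact {F gT}.

Lemma abC (gT : finGroupType) (G : {group gT}) : abelian G ->
  forall x y, x \in G -> y \in G -> (x * y = y * x)%g.
Proof. by move=> abG x y Hx Hy; apply: (centsP abG). Qed.

Lemma beta_mul (F : fieldType) (gT : finGroupType) (G : {group gT}) (Phi : gT -> gT -> gT -> F) :
  abelian G -> cocycle3 G Phi -> forall g h x y, g \in G -> h \in G -> x \in G -> y \in G ->
  beta Phi (g * h)%g x y = beta Phi g x y * beta Phi h x y.
Proof.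
move=> abG [NZ coc] g h x y Hg Hh Hx Hy.
have C : forall p q, p \in G -> q \in G -> (p * q = q * p)%g by exact: abC.
  have i0 : Phi h x y * Phi g (h * x)%g y * Phi g h x = Phi (g * h)%g x y * Phi g h (x * y)%g.
  { exact: (coc g h x y Hg Hh Hx Hy). }
  have q0 : ((Phi (g * h)%g x y * Phi g h (x * y)%g) / (Phi h x y * Phi g (h * x)%g y * Phi g h x)) = 1 by rewrite i0 divff // ?mulf_neq0 ?NZ ?groupM.
  have i1 : Phi h y x * Phi g (h * y)%g x * Phi g h y = Phi (g * h)%g y x * Phi g h (x * y)%g.
  { have := coc g h y x Hg Hh Hy Hx; rewrite (C y x Hy Hx) => H; exact H. }
  have q1 : ((Phi h y x * Phi g (h * y)%g x * Phi g h y) / (Phi (g * h)%g y x * Phi g h (x * y)%g)) = 1 by rewrite i1 divff // ?mulf_neq0 ?NZ ?groupM.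
  have i2 : Phi x h y * Phi g (h * x)%g y * Phi g x h = Phi (g * x)%g h y * Phi g x (h * y)%g.
  { have := coc g x h y Hg Hx Hh Hy; rewrite (C x h Hx Hh) => H; exact H. }
  have q2 : ((Phi x h y * Phi g (h * x)%g y * Phi g x h) / (Phi (g * x)%g h y * Phi g x (h * y)%g)) = 1 by rewrite i2 divff // ?mulf_neq0 ?NZ ?groupM.
  have i3 : Phi x y h * Phi g (x * y)%g h * Phi g x y = Phi (g * x)%g y h * Phi g x (h * y)%g.
  { have := coc g x y h Hg Hx Hy Hh; rewrite (C y h Hy Hh) => H; exact H. }
  have q3 : ((Phi (g * x)%g y h * Phi g x (h * y)%g) / (Phi x y h * Phi g (x * y)%g h * Phi g x y)) = 1 by rewrite i3 divff // ?mulf_neq0 ?NZ ?groupM.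
  have i4 : Phi y h x * Phi g (h * y)%g x * Phi g y h = Phi (g * y)%g h x * Phi g y (h * x)%g.
  { have := coc g y h x Hg Hy Hh Hx; rewrite (C y h Hy Hh) => H; exact H. }
  have q4 : ((Phi (g * y)%g h x * Phi g y (h * x)%g) / (Phi y h x * Phi g (h * y)%g x * Phi g y h)) = 1 by rewrite i4 divff // ?mulf_neq0 ?NZ ?groupM.
  have i5 : Phi y x h * Phi g (x * y)%g h * Phi g y x = Phi (g * y)%g x h * Phi g y (h * x)%g.
  { have := coc g y x h Hg Hy Hx Hh; rewrite (C y x Hy Hx) (C x h Hx Hh) => H; exact H. }
  have q5 : ((Phi y x h * Phi g (x * y)%g h * Phi g y x) / (Phi (g * y)%g x h * Phi g y (h * x)%g)) = 1 by rewrite i5 divff // ?mulf_neq0 ?NZ ?groupM.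
  have i6 : Phi g h y * Phi x (g * h)%g y * Phi x g h = Phi (g * x)%g h y * Phi x g (h * y)%g.
  { have := coc x g h y Hx Hg Hh Hy; rewrite (C x g Hx Hg) => H; exact H. }
  have q6 : ((Phi (g * x)%g h y * Phi x g (h * y)%g) / (Phi g h y * Phi x (g * h)%g y * Phi x g h)) = 1 by rewrite i6 divff // ?mulf_neq0 ?NZ ?groupM.
  have i7 : Phi g y h * Phi x (g * y)%g h * Phi x g y = Phi (g * x)%g y h * Phi x g (h * y)%g.
  { have := coc x g y h Hx Hg Hy Hh; rewrite (C x g Hx Hg) (C y h Hy Hh) => H; exact H. }
  have q7 : ((Phi g y h * Phi x (g * y)%g h * Phi x g y) / (Phi (g * x)%g y h * Phi x g (h * y)%g)) = 1 by rewrite i7 divff // ?mulf_neq0 ?NZ ?groupM.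
  have i8 : Phi y g h * Phi x (g * y)%g h * Phi x y g = Phi (x * y)%g g h * Phi x y (g * h)%g.
  { have := coc x y g h Hx Hy Hg Hh; rewrite (C y g Hy Hg) => H; exact H. }
  have q8 : ((Phi (x * y)%g g h * Phi x y (g * h)%g) / (Phi y g h * Phi x (g * y)%g h * Phi x y g)) = 1 by rewrite i8 divff // ?mulf_neq0 ?NZ ?groupM.
  have i9 : Phi g h x * Phi y (g * h)%g x * Phi y g h = Phi (g * y)%g h x * Phi y g (h * x)%g.
  { have := coc y g h x Hy Hg Hh Hx; rewrite (C y g Hy Hg) => H; exact H. }
  have q9 : ((Phi g h x * Phi y (g * h)%g x * Phi y g h) / (Phi (g * y)%g h x * Phi y g (h * x)%g)) = 1 by rewrite i9 divff // ?mulf_neq0 ?NZ ?groupM.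
  have i10 : Phi g x h * Phi y (g * x)%g h * Phi y g x = Phi (g * y)%g x h * Phi y g (h * x)%g.
  { have := coc y g x h Hy Hg Hx Hh; rewrite (C y g Hy Hg) (C x h Hx Hh) => H; exact H. }
  have q10 : ((Phi (g * y)%g x h * Phi y g (h * x)%g) / (Phi g x h * Phi y (g * x)%g h * Phi y g x)) = 1 by rewrite i10 divff // ?mulf_neq0 ?NZ ?groupM.
  have i11 : Phi x g h * Phi y (g * x)%g h * Phi y x g = Phi (x * y)%g g h * Phi y x (g * h)%g.
  { have := coc y x g h Hy Hx Hg Hh; rewrite (C y x Hy Hx) (C x g Hx Hg) => H; exact H. }
  have q11 : ((Phi x g h * Phi y (g * x)%g h * Phi y x g) / (Phi (x * y)%g g h * Phi y x (g * h)%g)) = 1 by rewrite i11 divff // ?mulf_neq0 ?NZ ?groupM.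
  have E : beta Phi (g * h)%g x y = beta Phi g x y * beta Phi h x y * ((Phi (g * h)%g x y * Phi g h (x * y)%g) / (Phi h x y * Phi g (h * x)%g y * Phi g h x)) * ((Phi h y x * Phi g (h * y)%g x * Phi g h y) / (Phi (g * h)%g y x * Phi g h (x * y)%g)) * ((Phi x h y * Phi g (h * x)%g y * Phi g x h) / (Phi (g * x)%g h y * Phi g x (h * y)%g)) * ((Phi (g * x)%g y h * Phi g x (h * y)%g) / (Phi x y h * Phi g (x * y)%g h * Phi g x y)) * ((Phi (g * y)%g h x * Phi g y (h * x)%g) / (Phi y h x * Phi g (h * y)%g x * Phi g y h)) * ((Phi y x h * Phi g (x * y)%g h * Phi g y x) / (Phi (g * y)%g x h * Phi g y (h * x)%g)) * ((Phi (g * x)%g h y * Phi x g (h * y)%g) / (Phi g h y * Phi x (g * h)%g y * Phi x g h)) * ((Phi g y h * Phi x (g * y)%g h * Phi x g y) / (Phi (g * x)%g y h * Phi x g (h * y)%g)) * ((Phi (x * y)%g g h * Phi x y (g * h)%g) / (Phi y g h * Phi x (g * y)%g h * Phi x y g)) * ((Phi g h x * Phi y (g * h)%g x * Phi y g h) / (Phi (g * y)%g h x * Phi y g (h * x)%g)) * ((Phi (g * y)%g x h * Phi y g (h * x)%g) / (Phi g x h * Phi y (g * x)%g h * Phi y g x)) * ((Phi x g h * Phi y (g * x)%g h * Phi y x g) / (Phi (x * y)%g g h * Phi y x (g * h)%g)).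
  { rewrite /beta /phit; field. 
    by rewrite ?mulf_neq0 ?invr_neq0 ?NZ ?groupM. }
  by rewrite E q0 q1 q2 q3 q4 q5 q6 q7 q8 q9 q10 q11 !mulr1.
Qed.

Lemma phit_neq0 (F : fieldType) (gT : finGroupType) (G : {group gT}) (Phi : gT -> gT -> gT -> F) :
  cocycle3 G Phi -> forall g x y, g \in G -> x \in G -> y \in G -> phit Phi g x y != 0.
Proof.
move=> [NZ _] g x y Hg Hx Hy; rewrite /phit.
by rewrite mulf_neq0 ?invr_neq0 ?mulf_neq0 ?NZ.
Qed.

Lemma beta_cyc (F : fieldType) (gT : finGroupType) (G : {group gT}) (Phi : gT -> gT -> gT -> F) :
  cocycle3 G Phi -> forall g x y, g \in G -> x \in G -> y \in G ->
  beta Phi g x y = beta Phi x y g.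
Proof.
move=> [NZ _] g x y Hg Hx Hy; rewrite /beta /phit.
field.
by rewrite ?mulf_neq0 ?invr_neq0 ?NZ.
Qed.

Lemma beta_diag (F : fieldType) (gT : finGroupType) (G : {group gT}) (Phi : gT -> gT -> gT -> F) :
  cocycle3 G Phi -> forall g x y, g \in G -> x \in G -> y \in G ->
  beta Phi g x y != 1 -> [/\ g != x, x != y & g != y].
Proof.
move=> [NZ _] g x y Hg Hx Hy.
rewrite /beta /phit.
have E : forall X : F, X = 1 -> X != 1 -> False by move=> X ->; rewrite eqxx.
case: (eqVneq g x) => [<-|gx]; first by move=> H; exfalso; apply: (E _ _ H); field; rewrite ?mulf_neq0 ?invr_neq0 ?NZ.
case: (eqVneq x y) => [<-|xy]; first by move=> H; exfalso; apply: (E _ _ H); field; rewrite ?mulf_neq0 ?invr_neq0 ?NZ.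
case: (eqVneq g y) => [<-|gy] //.
by move=> H; exfalso; apply: (E _ _ H); field; rewrite ?mulf_neq0 ?invr_neq0 ?NZ.
Qed.

Lemma beta_gen (F : fieldType) (gT : finGroupType) (G : {group gT}) (Phi : gT -> gT -> gT -> F)
  (S : {set gT}) :
  abelian G -> cocycle3 G Phi -> normalized3 G Phi -> S \subset G ->
  forall x y, x \in G -> y \in G -> (forall s, s \in S -> beta Phi s x y = 1) ->
  forall z, z \in <<S>>%g -> beta Phi z x y = 1.
Proof.
move=> abG coc nor sSG x y Hx Hy HS z /gen_prodgP [k [c Hc ->]].
have cG : forall i, c i \in G by move=> i; apply: (subsetP sSG).
elim: k c Hc cG => [|k IH] c Hc cG.
  rewrite big_ord0 /beta /phit.
  have [n1 [_ _]] := nor x y Hx Hy; have [n2 [_ _]] := nor y x Hy Hx.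
  have [_ [n3 _]] := nor x y Hx Hy; have [_ [n4 _]] := nor y x Hy Hx.
  have [_ [_ n5]] := nor x y Hx Hy; have [_ [_ n6]] := nor y x Hy Hx.
  by rewrite n1 n2 n3 n4 n5 n6 !mulr1 divr1 divff // oner_eq0.
rewrite big_ord_recr /=.
have HP : (\prod_(i < k) c (widen_ord (leqnSn k) i))%g \in G.
  by apply: group_prod => i _; apply: cG.
rewrite (@beta_mul _ _ G Phi abG coc) // ?cG.
rewrite (IH (fun i => c (widen_ord (leqnSn k) i))).
- by rewrite HS ?mul1r.
- by move=> i; apply: Hc.
- by move=> i; apply: cG.
Qed.

Lemma scal1_neq0 (F : fieldType) (d : nat) (c : F) : (0 < d)%N -> c != 0 ->
  c *: (1%:M : 'M[F]_d) != 0.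
Proof.
move=> Hd Hc; apply/eqP => /matrixP /(_ (Ordinal Hd) (Ordinal Hd)).
by rewrite !mxE eqxx mulr1; apply/eqP.
Qed.

Lemma diag_beta (F : fieldType) (gT : finGroupType) (G : {group gT}) (Phi : gT -> gT -> gT -> F)
  (V : ydobj F gT) :
  abelian G -> cocycle3 G Phi -> is_yd G Phi V -> diagonal_type G V ->
  forall g, g \in G -> (0 < ydim V g)%N -> forall e f, e \in G -> f \in G ->
  beta Phi g e f = 1.
Proof.
move=> abG coc [_ Y1 Ym] Hdg g Hg Hpos e f He Hf.
have [P [Pu Hd]] := Hdg g Hg.
pose B x := P *m yact V g x *m invmx P.
have BM : forall x y, B x *m B y = P *m (yact V g x *m yact V g y) *m invmx P.
  by move=> x y; rewrite /B !mulmxA -[_ *m invmx P *m P]mulmxA mulVmx // mulmx1.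
have Bs : forall x y, x \in G -> y \in G -> B y *m B x = phit Phi g x y *: B (x * y)%g.
  by move=> x y Hx Hy; rewrite BM Ym // /B scalemxAl scalemxAr.
have BC : forall x y, x \in G -> y \in G -> B y *m B x = B x *m B y.
  move=> x y Hx Hy; rewrite /B.
  have /diag_mxP [d1 ->] := Hd x Hx.
  have /diag_mxP [d2 ->] := Hd y Hy.
  by rewrite diag_mxC.
have tnz : forall x y z, x \in G -> y \in G -> z \in G -> phit Phi x y z != 0.
  exact: (@phit_neq0 _ _ G Phi coc).
have B1 : B 1%g = 1%:M by rewrite /B Y1 // mulmx1 mulmxV.
have Hef : (e * f)%g \in G by rewrite groupM.
have Hi : (e * f)^-1%g \in G by rewrite groupV.
have Binv : B (e * f)%g *m B (e * f)^-1%g = phit Phi g (e * f)^-1%g (e * f)%g *: 1%:M.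
  by rewrite (Bs _ _ Hi Hef) mulVg B1.
have Hneq : B (e * f)%g != 0.
  apply/eqP => H0; move: Binv; rewrite H0 mul0mx => /esym /eqP.
  apply/negP; apply: scal1_neq0 => //; exact: tnz.
have Eq : phit Phi g e f *: B (e * f)%g = phit Phi g f e *: B (e * f)%g.
  by rewrite -Bs // BC // Bs // (@abC _ G abG _ _ Hf He).
have : (phit Phi g e f - phit Phi g f e) *: B (e * f)%g == 0 by rewrite scalerBl Eq subrr.
rewrite scaler_eq0 (negbTE Hneq) orbF subr_eq0 => /eqP Et.
by rewrite /beta Et divff // tnz.
Qed.

Lemma dim0_sub (F : fieldType) (d : nat) (A B : 'M[F]_d) : d = 0%N -> (A <= B)%MS.
Proof. by move=> Hd; subst d; rewrite (thinmx0 A) sub0mx. Qed.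

Lemma ab_of_beta (F : closedFieldType) (gT : finGroupType) (H : {group gT})
  (Phi : gT -> gT -> gT -> F) :
  abelian H -> (forall a b c, a \in H -> b \in H -> c \in H -> Phi a b c != 0) ->
  (forall g e f, g \in H -> e \in H -> f \in H -> beta Phi g e f = 1) ->
  abelian_cocycle H Phi.
Proof.
move=> abH NZ Hb W [c1 c2 c3] [pos simp].
have [g0 Hg0] : exists g0, (0 < ydim W g0)%N.
  case: (pickP (fun g => 0 < ydim W g)%N) => [g0 H0|H0]; first by exists g0.
  move: pos; rewrite /ytotdim big1 // => g _.
  by apply/eqP; rewrite -leqn0 leqNgt H0.
have Hg0H : g0 \in H by apply: contraTT Hg0 => /c1 ->.
have oth : forall g, g != g0 -> ydim W g = 0%N.
  move=> g gne; apply/eqP; rewrite -leqn0 leqNgt; apply/negP => Hg.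
  pose U := fun k => if k == g0 then (1%:M : 'M[F]_(ydim W k)) else 0.
  have sU : yd_subobj H W U.
    move=> k e He; rewrite /U; case: (k == g0); first exact: submx1.
    by rewrite mul0mx sub0mx.
  case: (simp U sU) => [/(_ g0)|/(_ g)]; rewrite /U ?eqxx ?(negbTE gne).
  - move/matrixP/(_ (Ordinal Hg0) (Ordinal Hg0)); rewrite !mxE eqxx /= => /eqP.
    by rewrite oner_eq0.
  - rewrite /row_full mxrank0 eq_sym => /eqP E; by move: Hg; rewrite E.
have tot : ytotdim W = ydim W g0.
  by rewrite /ytotdim (bigD1 g0) //= big1 ?addn0 // => g /oth.
rewrite tot.
have tnz : forall x y z, x \in H -> y \in H -> z \in H -> phit Phi x y z != 0.
  by move=> x y z Hx Hy Hz; rewrite /phit mulf_neq0 ?invr_neq0 ?mulf_neq0 ?NZ.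
have Cm : forall e f, e \in H -> f \in H ->
    yact W g0 f *m yact W g0 e = yact W g0 e *m yact W g0 f.
  move=> e f He Hf; rewrite c3 // c3 // (@abC _ H abH _ _ Hf He).
  have -> : phit Phi g0 e f = phit Phi g0 e f / phit Phi g0 f e * phit Phi g0 f e.
    by rewrite divfK // tnz.
  by rewrite /beta in Hb; rewrite Hb // mul1r.
have Sc : forall e, e \in H -> exists l, yact W g0 e = l%:M.
  move=> e He.
  have [l Hl] : exists l, root (char_poly (yact W g0 e)) l.
    by apply/closed_rootP; rewrite size_char_poly eqSS -lt0n.
  move: Hl; rewrite -eigenvalue_root_char => /eigenvalueP [v Hv vnz].
  exists l.
  pose U := fun k => eigenspace (yact W k e) l.
  have sU : yd_subobj H W U.
    move=> k f Hf; case: (eqVneq k g0) => [->|kne]; last by apply: dim0_sub; apply: oth.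
    apply/eigenspaceP; rewrite -mulmxA -Cm // mulmxA.
    have /eigenspaceP -> := submx_refl (eigenspace (yact W g0 e) l).
    by rewrite scalemxAl.
  case: (simp U sU) => [/(_ g0) E0 | /(_ g0) F0].
  - exfalso; have : (v <= U g0)%MS by apply/eigenspaceP.
    by rewrite E0 submx0 (negbTE vnz).
  - by move: F0; rewrite -sub1mx => /eigenspaceP; rewrite mul1mx scalemx1.
pose U := fun k => (pid_mx 1 : 'M[F]_(ydim W k)).
have sU : yd_subobj H W U.
  move=> k f Hf; case: (eqVneq k g0) => [->|kne]; last by apply: dim0_sub; apply: oth.
  have [l ->] := Sc f Hf.
  by rewrite mul_mx_scalar scalemx_sub.
case: (simp U sU) => [/(_ g0) E0 | /(_ g0) F0].
- have := @rank_pid_mx F (ydim W g0) (ydim W g0) 1 Hg0 Hg0.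
  by rewrite /U in E0; rewrite E0 mxrank0.
- by move: F0; rewrite /row_full /U rank_pid_mx // => /eqP E; exact: esym E.
Qed.

Lemma ydeg_pos (F : fieldType) (gT : finGroupType) (V : ydobj F gT) :
  (0 < ytotdim V)%N -> (0 < ydim V (ydeg V))%N.
Proof.
move=> pos; rewrite /ydeg; case: pickP => [g Hg //|H0].
move: pos; rewrite /ytotdim big1 // => g _.
by apply/eqP; rewrite -leqn0 leqNgt H0.
Qed.

Lemma ydeg_in (F : fieldType) (gT : finGroupType) (G : {group gT}) Phi (V : ydobj F gT) :
  is_yd G Phi V -> ydeg V \in G.
Proof.
move=> [c1 _ _]; rewrite /ydeg; case: pickP => [g Hg|_] /=; last exact: group1.
by apply: contraTT Hg => /c1 ->.
Qed.


Arguments phit_neq0 {F gT G Phi}.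
Arguments beta_cyc {F gT G Phi}.
Arguments beta_diag {F gT G Phi}.
Arguments beta_gen {F gT G Phi S}.
Arguments diag_beta {F gT G Phi V}.
Arguments ydeg_in {F gT G Phi V}.
Arguments ydeg_pos {F gT V}.

Theorem proposition4p7 (F : closedFieldType) (gT : finGroupType)
  (G : {group gT}) (Phi : gT -> gT -> gT -> F)
  (n : nat) (V : 'I_n -> ydobj F gT) :
  [pchar F] =i pred0 ->
  abelian G ->
  cocycle3 G Phi -> normalized3 G Phi ->
  (forall i, is_yd G Phi (V i) /\ yd_simple G (V i)) ->
  ~ abelian_cocycle (supp_group V) Phi ->
  (3 <= n)%N /\
  exists i j k : 'I_n, [/\ i != j, j != k & i != k] /\
    [/\ ~ diagonal_type G (V i), ~ diagonal_type G (V j) & ~ diagonal_type G (V k)].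
Proof.
move=> _ abG coc nor HV nab.
set S := [set ydeg (V i) | i : 'I_n].
have sSG : S \subset G.
  by apply/subsetP => s /imsetP [i _ ->]; apply: (ydeg_in (HV i).1).
have sHG : supp_group V \subset G by rewrite /supp_group /= gen_subG.
have NZ : forall a b c, a \in G -> b \in G -> c \in G -> Phi a b c != 0 by case: coc.
have inG : forall x, x \in supp_group V -> x \in G by move=> x; apply: (subsetP sHG).
have [g [e [f [Hg He Hf Bg]]]] : exists g e f, [/\ g \in supp_group V, e \in supp_group V,
    f \in supp_group V & beta Phi g e f != 1].
  case: (boolP [exists g, exists e, exists f, [&& g \in supp_group V, e \in supp_group V,
    f \in supp_group V & beta Phi g e f != 1]]).
  - move/existsP => [g /existsP [e /existsP [f /and4P [? ? ? ?]]]].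
    by exists g, e, f.
  - move/existsPn => Hn; exfalso; apply: nab; apply: ab_of_beta.
    + exact: abelianS abG.
    + by move=> a b c Ha Hb Hc; apply: NZ; apply: inG.
    + move=> g e f Hg He Hf; apply/eqP.
      move: (Hn g) => /existsPn /(_ e) /existsPn /(_ f).
      by rewrite Hg He Hf /= negbK.
have red : forall x y z, x \in supp_group V -> y \in G -> z \in G -> beta Phi x y z != 1 ->
    exists2 s, s \in S & beta Phi s y z != 1.
  move=> x y z Hx Hy Hz Bx.
  case: (boolP [exists s, (s \in S) && (beta Phi s y z != 1)]).
  - by move/existsP => [s /andP [? ?]]; exists s.
  - move/existsPn => Hn; exfalso; move/eqP: Bx; apply.
    apply: (beta_gen abG coc nor sSG y z Hy Hz _ x Hx) => s Hs.
    by apply/eqP; move: (Hn s); rewrite Hs /= negbK.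
have SG : forall s, s \in S -> s \in G by move=> s; apply: (subsetP sSG).
have [s1 Hs1 B1] := red g e f Hg (inG e He) (inG f Hf) Bg.
rewrite (beta_cyc coc _ _ _ (SG _ Hs1) (inG e He) (inG f Hf)) in B1.
have [s2 Hs2 B2] := red e f s1 He (inG f Hf) (SG _ Hs1) B1.
rewrite (beta_cyc coc _ _ _ (SG _ Hs2) (inG f Hf) (SG _ Hs1)) in B2.
have [s3 Hs3 B3] := red f s1 s2 Hf (SG _ Hs1) (SG _ Hs2) B2.
have B4 := B3; rewrite (beta_cyc coc _ _ _ (SG _ Hs3) (SG _ Hs1) (SG _ Hs2)) in B4.
have B5 := B4; rewrite (beta_cyc coc _ _ _ (SG _ Hs1) (SG _ Hs2) (SG _ Hs3)) in B5.
have [d31 d12 d32] := beta_diag coc _ _ _ (SG _ Hs3) (SG _ Hs1) (SG _ Hs2) B3.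
move: Hs1 Hs2 Hs3 B3 B4 B5 d31 d12 d32 => /imsetP [i1 _ ->] /imsetP [i2 _ ->] /imsetP [i3 _ ->].
move=> B3 B4 B5 d31 d12 d32.
have nd : forall i x y, x \in G -> y \in G -> beta Phi (ydeg (V i)) x y != 1 ->
    ~ diagonal_type G (V i).
  move=> i x y Hx Hy Bi Hd; move/eqP: Bi; apply.
  apply: (diag_beta abG coc (HV i).1 Hd) => //; first exact: ydeg_in (HV i).1.
  exact: ydeg_pos (HV i).2.1.
have n12 : i1 != i2 by apply: contraNneq d12 => ->.
have n23 : i2 != i3 by apply: contraNneq d32 => ->.
have n13 : i1 != i3 by apply: contraNneq d31 => ->.
split.
  move: n12 n23 n13 (ltn_ord i1) (ltn_ord i2) (ltn_ord i3).
  rewrite -!(inj_eq val_inj) /=.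
  clear; move: (nat_of_ord i1) (nat_of_ord i2) (nat_of_ord i3) => a b c; lia.
have m1 : ydeg (V i1) \in G := ydeg_in (HV i1).1.
have m2 : ydeg (V i2) \in G := ydeg_in (HV i2).1.
have m3 : ydeg (V i3) \in G := ydeg_in (HV i3).1.
exists i1, i2, i3; split; first by [].
split.
- exact: (nd i1 _ _ m2 m3 B4).
- exact: (nd i2 _ _ m3 m1 B5).
- exact: (nd i3 _ _ m1 m2 B3).
Qed.
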